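(* Let $X$ be a finite, simple, connected $3$-valent plane graph such that the number of edges surrounding each face is divisible by $3$. Then there exists an edge numbering $\nu\colon E(X)\to\{1,2,3\}$ such that, at every vertex $p\in V(X)$, the three edges having $p$ as an endpoint receive the numbers $1,2,3$ in this cyclic order with respect to the positive (counterclockwise) orientation around $p$. *)

(* Defs.v *)
(* Plane graphs are encoded as combinatorial maps
   (rotation systems) of genus 0, the standard combinatorial model of
   a connected graph embedded in the oriented plane/sphere. *)
From mathcomp Require Import all_boot.
Set Implicit Arguments. Unset Strict Implicit. Unset Printing Implicit Defensive.

(* A combinatorial map on a finite set of darts (half-edges) T:
   - edge  : the fixed-point-free involution pairing the two darts of an edge;
   - node  : the permutation sending a dart to the next dart around the same
             vertex in the positive (counterclockwise) orientation.
   Vertices = node-orbits, edges = edge-orbits, faces = face-orbits where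
   face := node \o edge (the face permutation). *)
Record cmap := CMap {
  dart :> finType;
  edge : dart -> dart;
  node : dart -> dart;
  edgeK : involutive edge;
  edge_nofix : forall x, edge x != x;
  node_inj : injective node
}.

Definition face (G : cmap) (x : G) : G := node (edge x).

Definition n_vertices (G : cmap) : nat := fcard (@node G) G.
Definition n_edges (G : cmap) : nat := fcard (@edge G) G.
Definition n_faces (G : cmap) : nat := fcard (@face G) G.

Definition cmap_connected (G : cmap) : Prop :=
  forall x y : G, connect (fun a b : G => (b == node a) || (b == edge a)) x y.

(* plane (genus 0) embedding: Euler's formula V - E + F = 2 *)
Definition cmap_planar (G : cmap) : Prop :=
  (n_vertices G + n_faces G = n_edges G + 2)%N.

Definition cmap_cubic (G : cmap) : Prop :=
  forall x : G, order (@node G) x = 3.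

(* simple: no loops and no multiple edges *)
Definition cmap_simple (G : cmap) : Prop :=
  (forall x : G, ~~ fconnect (@node G) x (edge x)) /\
  (forall x y : G, fconnect (@node G) x y ->
     fconnect (@node G) (edge x) (edge y) -> x = y).

Definition face_degree (G : cmap) (x : G) : nat := order (@face G) x.

(* an edge numbering E(X) -> {1,2,3}, represented on darts and constant on
   the two darts of each edge *)
Definition edge_numbering (G : cmap) (nu : G -> nat) : Prop :=
  (forall x : G, nu x \in [:: 1; 2; 3]) /\
  (forall x : G, nu (edge x) = nu x).

(* around every vertex, the numbers 1,2,3 appear in this cyclic order in the
   counterclockwise direction: the next edge ccw after one numbered k is
   numbered k+1 (mod 3, in {1,2,3}) *)
Definition ccw_123 (G : cmap) (nu : G -> nat) : Prop :=
  forall x : G, nu (node x) = (nu x %% 3).+1.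

(* Main.v *)
Require Import Defs.
From mathcomp Require Import all_boot all_algebra.
From mathcomp Require Import zify.
Set Implicit Arguments. Unset Strict Implicit. Unset Printing Implicit Defensive.
Import GRing.Theory.
Local Open Scope ring_scope.

Section Main.
Variable X : cmap.
Local Notation D := (dart X).
Local Notation n := #|D|.
Local Notation K := 'F_3.

Lemma evE (i : 'I_n) (y : D) : (enum_val i == y) = (i == enum_rank y).
Proof. by apply/eqP/eqP => [<-|->]; rewrite ?enum_valK ?enum_rankK. Qed.

Lemma sum_delta m (c : 'I_m -> K) (k : 'I_m) :
  \sum_i c i * (i == k)%:R = c k.
Proof.
rewrite (bigD1 k) //= eqxx mulr1 big1 ?addr0 // => i /negbTE ->; by rewrite mulr0.
Qed.

Lemma sumD (F : D -> K) : \sum_(j < n) F (enum_val j) = \sum_x F x.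
Proof. by rewrite [RHS](reindex (@enum_val D (pred_of_simpl predT))) //=; apply: onW_bij; apply: enum_val_bij. Qed.

Section Ind.
Variable p : D -> D.
Hypothesis pinj : injective p.

Definition rts := [set x : D | froot p x == x].
Lemma rts_root x : froot p x \in rts.
Proof. by rewrite inE; apply: (roots_root (fconnect_sym pinj)). Qed.
Lemma froot_p x : froot p (p x) = froot p x.
Proof. symmetry; apply/(fingraph.rootP (fconnect_sym pinj)); exact: fconnect1. Qed.

Definition rk x : 'I_#|rts| := enum_rank_in (rts_root x) (froot p x).

Lemma rkK y : enum_val (rk y) = froot p y.
Proof. by rewrite /rk enum_rankK_in // rts_root. Qed.

Definition Ind : 'M[K]_(#|rts|, n) :=
  \matrix_(i, j) ((froot p (enum_val j) == enum_val i)%:R).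

Lemma mulIndE m (w : 'M[K]_(m, #|rts|)) a j :
  (w *m Ind) a j = w a (rk (enum_val j)).
Proof.
rewrite !mxE -[RHS](sum_delta (w a)); apply: eq_bigr => i _; rewrite mxE.
suff -> : (froot p (enum_val j) == enum_val i) = (i == rk (enum_val j)) by [].
apply/eqP/eqP => [h|->]; last by rewrite /rk enum_rankK_in // rts_root.
by apply: enum_val_inj; rewrite -h /rk enum_rankK_in // rts_root.
Qed.

Lemma rk_p x : rk (p x) = rk x.
Proof. by apply: enum_val_inj; rewrite !rkK froot_p. Qed.

Lemma Ind_inv m (w : 'M[K]_(m, #|rts|)) a x :
  (w *m Ind) a (enum_rank (p x)) = (w *m Ind) a (enum_rank x).
Proof. by rewrite !mulIndE !enum_rankK rk_p. Qed.

Lemma Ind_inv' a x : Ind a (enum_rank (p x)) = Ind a (enum_rank x).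
Proof. by rewrite !mxE !enum_rankK froot_p. Qed.

Lemma Ind_free : row_free Ind.
Proof.
rewrite -kermx_eq0; apply/eqP/row_matrixP => i; rewrite row0.
have h := mulmx_ker Ind; move/(congr1 (row i)): h; rewrite row_mul row0.
move=> h; apply/rowP => k; rewrite [X in _ = X]mxE.
have := mulIndE (row i (kermx Ind)) 0 (enum_rank (enum_val k)).
rewrite h [X in X = _]mxE enum_rankK.
suff -> : rk (enum_val k) = k by move=> <-.
apply: enum_val_inj; rewrite rkK.
by have := enum_valP k; rewrite inE => /eqP.
Qed.

Lemma sumInd i : \sum_j Ind i j = (order p (enum_val i))%:R.
Proof.
under eq_bigr do rewrite mxE.
rewrite (sumD (fun x => (froot p x == enum_val i)%:R)).
rewrite (eq_bigr (fun x => if froot p x == enum_val i then 1 else 0)); last first.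
  by move=> x _; case: eqP.
rewrite -big_mkcond sumr_const /order; congr (_%:R).
have r_root : froot p (enum_val i) = enum_val i.
  by have := enum_valP i; rewrite inE => /eqP.
apply: eq_card => x; rewrite unfold_in /=.
transitivity (froot p x == froot p (enum_val i)); first by rewrite r_root.
by rewrite (root_connect (fconnect_sym pinj)) fconnect_sym.
Qed.
End Ind.

Local Notation node := (@node X).
Local Notation edge := (@edge X).
Local Notation face := (@face X).

Definition Nm : 'M[K]_n :=
  \matrix_(i, j) ((enum_val i == node (enum_val j))%:R - (i == j)%:R).
Definition Pe : 'M[K]_n :=
  \matrix_(i, j) ((enum_val i == edge (enum_val j))%:R).

Lemma sum_delta' m (c : 'I_m -> K) (k : 'I_m) :
  \sum_i c i * (k == i)%:R = c k.
Proof. by rewrite -[RHS](sum_delta c); apply: eq_bigr => i _; rewrite eq_sym. Qed.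

Lemma mulNm (c : 'rV[K]_n) j :
  (c *m Nm) 0 j = c 0 (enum_rank (node (enum_val j))) - c 0 j.
Proof.
rewrite !mxE; under eq_bigr do rewrite mxE mulrBr evE.
by rewrite sumrB sum_delta sum_delta.
Qed.

Lemma node_inj' : injective node. Proof. exact: node_inj. Qed.

Lemma mulNmT (c : 'rV[K]_n) j :
  (c *m Nm^T) 0 j = c 0 (enum_rank (finv node (enum_val j))) - c 0 j.
Proof.
rewrite !mxE; under eq_bigr => i _.
  rewrite !mxE mulrBr.
  have -> : (enum_val j == node (enum_val i)) = (i == enum_rank (finv node (enum_val j))).
    rewrite -evE; apply/eqP/eqP => [->|->]; first by rewrite finv_f //; exact: node_inj.
    by rewrite f_finv //; exact: node_inj.
  over.
by rewrite sumrB sum_delta sum_delta'.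
Qed.

Lemma mulPe (c : 'rV[K]_n) j :
  (c *m Pe) 0 j = c 0 (enum_rank (edge (enum_val j))).
Proof.
rewrite !mxE; under eq_bigr do rewrite mxE evE.
by rewrite sum_delta.
Qed.

Lemma edge_inj' : injective edge. Proof. exact: (can_inj (@edgeK X)). Qed.
Lemma face_inj' : injective face.
Proof. by move=> x y /node_inj /edge_inj'. Qed.

Lemma F3_double (S : K) : S + S = 0 -> S = 0.
Proof.
move=> h. have: S = (S + S) * 2 by apply/val_inj; case: S {h} => [[|[|[|]]] ?].
by rewrite h mul0r.
Qed.

Lemma anti0 (h : 'rV[K]_n) :
  (forall x, h 0 (enum_rank (edge x)) = - h 0 (enum_rank x)) ->
  h *m (Ind edge)^T = 0.
Proof.
move=> ha; apply/rowP => r; rewrite [RHS]mxE !mxE.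
apply: F3_double.
set S := \sum_j _.
suff eS : S = - S by rewrite {1}eS addNr.
have einj : injective (fun j : 'I_n => enum_rank (edge (enum_val j))).
  by move=> j k /enum_rank_inj /edge_inj' /enum_val_inj.
rewrite {1}/S (reindex_inj einj) /= -sumrN; apply: eq_bigr => j _.
rewrite !mxE enum_rankK (froot_p edge_inj') ha.
by rewrite enum_valK mulNr.
Qed.

Hypothesis hconn : cmap_connected X.

Lemma conn_const (g : D -> K) : (forall x, g (node x) = g x) ->
  (forall x, g (edge x) = g x) -> forall x y, g x = g y.
Proof.
move=> gn ge x y; case/connectP: (hconn x y) => q pq ->.
elim: q x pq => //= z q IH x /andP [e pq].
by rewrite -(IH _ pq); case/orP: e => /eqP ->; rewrite ?gn ?ge.
Qed.

Variable x0 : D.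

Lemma const_row (c : 'rV[K]_n) :
  (forall x, c 0 (enum_rank (node x)) = c 0 (enum_rank x)) ->
  (forall x, c 0 (enum_rank (edge x)) = c 0 (enum_rank x)) ->
  c = c 0 (enum_rank x0) *: const_mx 1.
Proof.
move=> hn he; apply/rowP => j; rewrite !mxE mulr1 -{1}(enum_valK j).
exact: (conn_const (g := fun x => c 0 (enum_rank x))).
Qed.

Local Notation Ie := (Ind edge).
Local Notation Iv := (Ind node).
Local Notation If := (Ind face).
Definition A := Ie *m Nm.
Definition Y := col_mx Iv (If *m Pe).

Lemma rank_kerA : (\rank (kermx A) <= 1)%N.
Proof.
rewrite -(mxrankMfree _ (Ind_free edge_inj')).
apply: leq_trans (rank_leq_row (const_mx 1 : 'rV[K]_n)).
apply: mxrankS; apply/row_subP => i; rewrite row_mul.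
set c := row i (kermx A) *m Ie.
have hc0 : c *m Nm = 0 by rewrite /c -mulmxA -row_mul mulmx_ker row0.
rewrite (@const_row c); first by rewrite scalemx_sub.
  move=> x; have := mulNm c (enum_rank x); rewrite hc0 mxE enum_rankK.
  by move/eqP; rewrite eq_sym subr_eq0 => /eqP.
by move=> x; rewrite /c; exact: (Ind_inv edge_inj').
Qed.

Lemma rank_kerY : (\rank (kermx Y) <= 1)%N.
Proof.
have Bdfree : row_free (block_mx Iv 0 0 If).
  rewrite /row_free rank_diag_block_mx.
  by rewrite (eqP (Ind_free node_inj')) (eqP (Ind_free face_inj')).
rewrite -(mxrankMfree _ Bdfree).
apply: leq_trans (rank_leq_row (row_mx (const_mx 1) (const_mx (-1)) : 'M[K]_(1, n + n))).
apply: mxrankS; apply/row_subP => i; rewrite row_mul.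
set w := row i (kermx Y).
have hw : w *m Y = 0 by rewrite /w -row_mul mulmx_ker row0.
rewrite -(hsubmxK w) mul_row_block !mulmx0 addr0 add0r.
rewrite -(hsubmxK w) /Y mul_row_col mulmxA in hw.
set G := lsubmx w *m Iv in hw *; set H := rsubmx w *m If in hw *.
have rel x : G 0 (enum_rank x) = - H 0 (enum_rank (edge x)).
  have := hw; move/rowP/(_ (enum_rank x)).
  rewrite [X in _ = X]mxE mxE mulPe enum_rankK.
  by move/eqP; rewrite addr_eq0 => /eqP.
have Gn x : G 0 (enum_rank (node x)) = G 0 (enum_rank x).
  exact: (Ind_inv node_inj').
have Hf x : H 0 (enum_rank (face x)) = H 0 (enum_rank x).
  exact: (Ind_inv face_inj').
clearbody G H.
have HG x : H 0 (enum_rank x) = - G 0 (enum_rank (edge x)).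
  by rewrite rel (@edgeK X) opprK.
have Gen z : G 0 (enum_rank (edge (node z))) = G 0 (enum_rank z).
  apply: oppr_inj; rewrite -HG.
  have -> : node z = face (edge z) by rewrite /Defs.face (@edgeK X).
  by rewrite Hf HG (@edgeK X).
have Ge y : G 0 (enum_rank (edge y)) = G 0 (enum_rank y).
  rewrite -{1}(f_finv node_inj' y) Gen.
  by rewrite -[in RHS](f_finv node_inj' y) Gn.
have GE := const_row Gn Ge.
have HE : H = - G 0 (enum_rank x0) *: const_mx 1.
  apply/rowP => j; rewrite -(enum_valK j) HG GE !mxE.
  by rewrite !mulr1.
rewrite GE HE scaleNr -scalerN -scale_row_mx; apply: scalemx_sub.
have -> : (- const_mx 1 : 'rV[K]_n) = const_mx (-1) by apply/rowP => j; rewrite !mxE.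
exact: submx_refl.
Qed.

Lemma froot_finv y : froot node (finv node y) = froot node y.
Proof. by rewrite -[in RHS](f_finv node_inj' y) (froot_p node_inj'). Qed.

Lemma froot_face_finv y : froot face (edge (finv node y)) = froot face y.
Proof.
rewrite -(froot_p face_inj') /Defs.face (@edgeK X).
by rewrite (f_finv node_inj').
Qed.

Lemma flowY : Y *m A^T = 0.
Proof.
rewrite /A trmx_mul mulmxA /Y !mul_col_mx -col_mx0; congr col_mx.
  apply/row_matrixP => i; rewrite row0 !row_mul; apply: anti0 => x.
  rewrite !mulNmT !mxE !enum_rankK !froot_finv.
  by rewrite !subrr oppr0.
apply/row_matrixP => i; rewrite row0 !row_mul; apply: anti0 => x.
rewrite !mulNmT !mulPe !enum_rankK !mxE !enum_rankK !froot_face_finv.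
by rewrite (@edgeK X) opprB.
Qed.

Hypothesis hcubic : cmap_cubic X.
Hypothesis hface : forall x : X, (3 %| face_degree x)%N.

Lemma F3_dvd k : (3 %| k)%N -> (k%:R : K) = 0.
Proof.
by move/dvdnP=> [q ->]; rewrite natrM (_ : 3%:R = 0 :> K) ?mulr0 //; apply/val_inj.
Qed.

Lemma Ind_const (p : D -> D) (pinj : injective p) :
  (forall x, (3 %| order p x)%N) -> Ind p *m (const_mx 1 : 'cV[K]_n) = 0.
Proof.
move=> h3; apply/matrixP => i k; rewrite [RHS]mxE mxE.
under eq_bigr do rewrite [const_mx _ _ _]mxE mulr1.
by rewrite sumInd // F3_dvd.
Qed.

Lemma sumsY : Y *m (const_mx 1 : 'rV[K]_n)^T = 0.
Proof.
rewrite trmx_const /Y mul_col_mx -mulmxA -col_mx0; congr col_mx.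
  by apply: Ind_const node_inj' _ => x; rewrite hcubic.
have -> : Pe *m (const_mx 1 : 'cV[K]_n) = const_mx 1.
  apply/matrixP => j k; rewrite !mxE.
  under eq_bigr => i _.
    rewrite !mxE mulr1.
    have -> : (enum_val j == edge (enum_val i)) = (i == enum_rank (edge (enum_val j))).
      rewrite -evE; apply/eqP/eqP => [->|->]; by rewrite (@edgeK X).
    rewrite -[_%:R]mul1r.
    over.
  by rewrite (sum_delta (fun _ => 1)).
exact: Ind_const face_inj' hface.
Qed.

Lemma card_rts p : #|rts p| = fcard p D.
Proof. by apply: eq_card => x; rewrite !inE andbT. Qed.

Lemma order_edge x : order edge x = 2.
Proof.
have fc : fcycle edge [:: x; edge x] by rewrite /= (@edgeK X) !eqxx.
have up : uniq [:: x; edge x] by rewrite /= inE andbT eq_sym (edge_nofix x).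
exact: (order_cycle fc up (mem_head _ _)).
Qed.

Lemma n_eq : #|D| = (#|rts edge| * 2)%N.
Proof.
rewrite card_rts (fcard_order_set edge_inj') //.
by apply/subsetP => x _; rewrite inE order_edge.
Qed.

Hypothesis hplanar : cmap_planar X.

Lemma main_nu : exists nu : D -> nat, edge_numbering nu /\ ccw_123 nu.
Proof.
pose b := (const_mx 1 : 'rV[K]_n).
have hrA := rank_kerA; rewrite mxrank_ker in hrA.
have hrY := rank_kerY; rewrite mxrank_ker in hrY.
have Eul : (#|rts node| + #|rts face| = #|rts edge| + 2)%N.
  by rewrite !card_rts; exact: hplanar.
have hn := n_eq.
have subY : (Y <= kermx A^T)%MS by rewrite sub_kermx flowY.
have rk : (\rank (kermx A^T) <= \rank Y)%N.
  rewrite mxrank_ker mxrank_tr; lia.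
have kerY : (kermx A^T <= Y)%MS.
  by rewrite -(mxrank_leqif_sup subY).2 eqn_leq rk mxrankS.
have cokY : ((cokermx A)^T <= Y)%MS.
  apply: submx_trans kerY.
  by rewrite sub_kermx -trmx_mul mulmx_coker trmx0.
have bA : (b <= A)%MS.
  rewrite submxE; case/submxP: cokY => W hW.
  rewrite -[cokermx A]trmxK hW trmx_mul mulmxA.
  have -> : b *m Y^T = 0.
    by apply: trmx_inj; rewrite trmx_mul trmxK sumsY trmx0.
  by rewrite mul0mx.
case/submxP: bA => Dm hD.
pose c := Dm *m Ie.
have cN : c *m Nm = b by rewrite /c -mulmxA hD.
exists (fun x => (val (c 0 (enum_rank x))).+1); split; first split.
- by move=> x; case: (c 0 _) => [[|[|[|]]] ?].
- by move=> x /=; rewrite /c (Ind_inv edge_inj').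
move=> x /=; have := mulNm c (enum_rank x).
rewrite cN mxE enum_rankK => /eqP; rewrite eq_sym subr_eq => /eqP ->.
by case: (c 0 (enum_rank x)) => [[|[|[|]]] ?].
Qed.

End Main.

Local Close Scope ring_scope.

Theorem proposition2p9 (X : cmap) :
  cmap_connected X -> cmap_planar X -> cmap_simple X -> cmap_cubic X ->
  (forall x : X, 3 %| face_degree x) ->
  exists nu : X -> nat, edge_numbering nu /\ ccw_123 nu.
Proof.
move=> hconn hpl _ hcub hface.
case: (pickP (fun _ : X => true)) => [x0 _|h0].
  exact: (main_nu hconn x0 hcub hface hpl).
exfalso; move: hpl; rewrite /cmap_planar /n_vertices /n_faces /n_edges.
by rewrite /n_comp_mem !eq_card0 // => x; have := h0 x.
Qed.
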